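(* Assume the setup of the context with $F$ formally real, and let $B$ be a $\ast$-symmetric basis of $H$. Then for every $\lambda\in\Lambda$: (a) $\chi_\lambda(h)=\chi_\lambda(h^\ast)$ for all $h\in H$; (b) $\nu(\chi_\lambda(x))\ge-a_\lambda$ for all $x\in B$, with equality for at least one $x\in B$.
   Context: Setup: $\Gamma$ totally ordered abelian group; $K$ a field with surjective valuation $\nu:K\to\Gamma\cup\{\infty\}$, valuation ring $\mathcal{O}$, maximal ideal $\mathfrak m$, formally real residue field $F=\mathcal{O}/\mathfrak m$. $H$ a finite-dimensional split semisimple symmetric $K$-algebra with trace form $\tau$; simple modules indexed by $\Lambda$, characters $\chi_\lambda$, Schur elements $c_\lambda$ with $\tau=\sum_\lambda c_\lambda^{-1}\chi_\lambda$; $a_\lambda:=-\tfrac12\nu(c_\lambda)$. $\ast$ is a $K$-linear involutive antiautomorphism of $H$; a $\ast$-symmetric basis is a basis $B$ with $B^\ast=B$ and $\tau(bc^\ast)=\delta_{bc}$. *)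

(* Defs.v *)
From HB Require Import structures.
From mathcomp Require Import all_boot all_order all_algebra all_field.
Set Implicit Arguments. Unset Strict Implicit. Unset Printing Implicit Defensive.
Import Order.TTheory GRing.Theory.
Local Open Scope ring_scope.

Definition ordered_abelian_group (G : zmodType) (le : rel G) : Prop :=
  [/\ reflexive le, antisymmetric le, transitive le, total le &
      forall x y z : G, le x y -> le (x + z) (y + z)].

(* Gamma u {oo}, with None = oo *)
Definition ole (G : zmodType) (le : rel G) (x y : option G) : bool :=
  match x, y with
  | _, None => true
  | None, Some _ => false
  | Some a, Some b => le a b
  end.
Definition olt (G : zmodType) (le : rel G) (x y : option G) : bool :=
  ole le x y && (x != y).
Definition oadd (G : zmodType) (x y : option G) : option G :=
  match x, y with Some a, Some b => Some (a + b) | _, _ => None end.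
Definition omin (G : zmodType) (le : rel G) (x y : option G) : option G :=
  if ole le x y then x else y.
Definition odouble (G : zmodType) (x : option G) : option G :=
  omap (fun g => g *+ 2) x.

Definition surj_valuation (K : fieldType) (G : zmodType) (le : rel G)
    (nu : K -> option G) : Prop :=
  [/\ forall x, nu x = None <-> x = 0,
      forall x y, nu (x * y) = oadd (nu x) (nu y),
      forall x y, ole le (omin le (nu x) (nu y)) (nu (x + y)) &
      forall g : option G, exists x, nu x = g].

Definition in_valring (K : fieldType) (G : zmodType) (le : rel G)
  (nu : K -> option G) (x : K) : bool := ole le (Some 0) (nu x).
Definition in_maxideal (K : fieldType) (G : zmodType) (le : rel G)
  (nu : K -> option G) (x : K) : bool := olt le (Some 0) (nu x).

(* The residue field F = O/m is formally real: -1 is not a sum of squares in F,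
   i.e. there are no a_1..a_n in O with 1 + sum a_i^2 in m. *)
Definition residue_formally_real (K : fieldType) (G : zmodType) (le : rel G)
  (nu : K -> option G) : Prop :=
  forall s : seq K, all (in_valring le nu) s ->
    ~~ in_maxideal le nu (1 + \sum_(a <- s) a ^+ 2).

Definition klinear (K : fieldType) (H : falgType K) (f : H -> K) : Prop :=
  forall (a : K) (x y : H), f (a *: x + y) = a * f x + f y.

Definition symmetrizing_form (K : fieldType) (H : falgType K) (tau : H -> K) : Prop :=
  [/\ klinear tau,
      forall x y : H, tau (x * y) = tau (y * x) &
      forall x : H, (forall y : H, tau (x * y) = 0) -> x = 0].

Definition involutive_antiautomorphism (K : fieldType) (H : falgType K)
    (star : H -> H) : Prop :=
  [/\ forall (a : K) (x y : H), star (a *: x + y) = a *: star x + star y,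
      forall x y : H, star (x * y) = star y * star x,
      star 1 = 1 &
      involutive star].

(* ---------- Split semisimple: H ~= prod_lambda M_{d lambda}(K) ----------
   rho lambda : H -> M_{d lambda}(K) is the representation afforded by the
   simple module indexed by lambda. *)
Definition split_semisimple_data (K : fieldType) (H : falgType K) (L : finType)
    (d : L -> nat) (rho : forall l : L, H -> 'M[K]_(d l)) : Prop :=
  (forall l, (0 < d l)%N) /\
  [/\ forall l (a : K) (x y : H), rho l (a *: x + y) = a *: rho l x + rho l y,
      forall l (x y : H), rho l (x * y) = rho l x *m rho l y,
      forall l, rho l 1 = 1%:M,
      forall x y : H, (forall l, rho l x = rho l y) -> x = y &
      forall M : (forall l : L, 'M[K]_(d l)), exists h : H, forall l, rho l h = M l].

Definition character (K : fieldType) (H : falgType K) (L : finType)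
    (d : L -> nat) (rho : forall l : L, H -> 'M[K]_(d l)) (l : L) (h : H) : K :=
  \tr (rho l h).

Definition schur_elements (K : fieldType) (H : falgType K) (L : finType)
    (d : L -> nat) (rho : forall l : L, H -> 'M[K]_(d l)) (tau : H -> K)
    (c : L -> K) : Prop :=
  (forall l, c l != 0) /\
  (forall h : H, tau h = \sum_(l : L) (c l)^-1 * character rho l h).

Definition star_symmetric_basis (K : fieldType) (H : falgType K) (tau : H -> K)
    (star : H -> H) (B : seq H) : Prop :=
  [/\ basis_of fullv B,
      {in B, forall b, star b \in B} &
      {in B &, forall b c, tau (b * star c) = (b == c)%:R}].

(* Main.v *)
Require Import Defs.
From HB Require Import structures.
From mathcomp Require Import all_boot all_order all_algebra all_field.
Set Implicit Arguments. Unset Strict Implicit. Unset Printing Implicit Defensive.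
Import GRing.Theory.
Local Open Scope ring_scope.

Section Val.
Variables (G : zmodType) (le : rel G) (K : fieldType) (nu : K -> option G).
Hypothesis hG : ordered_abelian_group le.
Hypothesis hnu : surj_valuation le nu.
Hypothesis hfr : residue_formally_real le nu.

Lemma ole_refl x : ole le x x.
Proof. by case: hG => r _ _ _ _; case: x => //= a; apply: r. Qed.

Lemma ole_trans y x z : ole le x y -> ole le y z -> ole le x z.
Proof.
case: hG => _ _ t _ _; case: x => [a|]; case: y => [b|]; case: z => [c|] //=.
exact: t.
Qed.

Lemma ole_total x y : ole le x y || ole le y x.
Proof. by case: hG => _ _ _ t _; case: x => [a|]; case: y => [b|] //=; apply: t. Qed.

Lemma le_addr (a b c : G) : le a b -> le (a + c) (b + c).
Proof. by case: hG => _ _ _ _ h; apply: h. Qed.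

Lemma nu0 : nu 0 = None.
Proof. by case: hnu => h _ _ _; apply/h. Qed.

Lemma nu_neq0 x : x != 0 -> exists g, nu x = Some g.
Proof.
case: hnu => h _ _ _ nx; case E: (nu x) => [g|]; first by exists g.
by move/h: E => E; rewrite E eqxx in nx.
Qed.

Lemma nuM x y : nu (x * y) = oadd (nu x) (nu y).
Proof. by case: hnu => _ h _ _. Qed.

Lemma nu1 : nu 1 = Some 0.
Proof.
have [g Eg] := nu_neq0 (oner_neq0 K).
rewrite Eg; congr Some.
have := nuM 1 1; rewrite mulr1 Eg /= => E; case: E => E.
by apply: (addrI g); rewrite -E addr0.
Qed.

Lemma vr_add x y : in_valring le nu x -> in_valring le nu y -> in_valring le nu (x + y).
Proof.
rewrite /in_valring => hx hy; case: hnu => _ _ h _.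
apply: ole_trans (h x y); rewrite /omin; by case: ifP.
Qed.

Lemma vr_mul x y : in_valring le nu x -> in_valring le nu y -> in_valring le nu (x * y).
Proof.
rewrite /in_valring nuM; case: (nu x) => [a|] //; case: (nu y) => [b|] //=.
move=> ha hb; case: hG => _ _ t _ _; apply: t (hb) _.
by have := le_addr b ha; rewrite add0r.
Qed.

Lemma vr1 : in_valring le nu 1.
Proof. by rewrite /in_valring nu1; apply: ole_refl. Qed.

Lemma vr_sumsq (s : seq K) : all (in_valring le nu) s ->
  nu (1 + \sum_(a <- s) a ^+ 2) = Some 0.
Proof.
move=> hs.
have hv : in_valring le nu (1 + \sum_(a <- s) a ^+ 2).
  apply: vr_add; first exact: vr1.
  elim: s hs => [|a s IH] /=; first by rewrite big_nil /in_valring nu0.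
  case/andP=> ha hs; rewrite big_cons; apply: vr_add; last exact: IH.
  by rewrite expr2; apply: vr_mul.
move: (hfr hs) hv; rewrite /in_maxideal /in_valring /olt.
case: (nu _) => [g|] //= h1 h2; move: h1; rewrite h2 /= negbK => /eqP <-.
by [].
Qed.

Lemma nu_natr n : nu (n.+1%:R) = Some 0.
Proof.
have -> : n.+1%:R = 1 + \sum_(a <- nseq n (1 : K)) a ^+ 2.
  rewrite -nat1r; congr (_ + _); elim: n => [|n IH]; first by rewrite big_nil.
  by rewrite /= big_cons -IH expr1n nat1r.
apply: vr_sumsq; elim: n => //= n ->; by rewrite vr1.
Qed.

Lemma natr_neq0 n : (0 < n)%N -> n%:R != 0 :> K.
Proof.
case: n => // n _; apply/eqP => E; have := nu_natr n; by rewrite E nu0.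
Qed.

Lemma exists_min (s : seq K) : s != [::] ->
  exists2 m, m \in s & forall y, y \in s -> ole le (nu m) (nu y).
Proof.
elim: s => // a s IH _; case: (eqVneq s [::]) => [->|/IH [m ms hm]].
  by exists a => [|y]; rewrite ?mem_seq1 ?eqxx // => /eqP ->; apply: ole_refl.
case/orP: (ole_total (nu a) (nu m)) => h.
  exists a; first by rewrite mem_head.
  move=> y; rewrite in_cons => /orP[/eqP ->|ys]; first exact: ole_refl.
  by apply: ole_trans h (hm _ ys).
exists m; first by rewrite in_cons ms orbT.
by move=> y; rewrite in_cons => /orP[/eqP ->|ys] //; apply: hm.
Qed.

Lemma sumsq_val (s : seq K) : has (fun x => x != 0) s ->
  exists2 m, m \in s & [/\ (forall y, y \in s -> ole le (nu m) (nu y)),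
    nu (\sum_(y <- s) y ^+ 2) = odouble (nu m) & m != 0].
Proof.
move=> hs; have sn : s != [::] by case: s hs.
have [m ms hm] := exists_min sn; exists m => //.
have m0 : m != 0.
  apply/negP => /eqP m0; case/hasP: hs => y ys y0.
  have := hm y ys; rewrite m0 nu0; have [g ->] := nu_neq0 y0; by [].
split => //.
have [g Eg] := nu_neq0 m0.
set t := 1 + \sum_(a <- [seq y / m | y <- rem m s]) a ^+ 2.
have Et : \sum_(y <- s) y ^+ 2 = m ^+ 2 * t.
  rewrite (perm_big _ (perm_to_rem ms)) big_cons /t big_map mulrDr mulr1.
  congr (_ + _); rewrite mulr_sumr; apply: eq_bigr => y _.
  by rewrite expr_div_n mulrC divfK // expf_neq0.
have ht : nu t = Some 0.
  apply: vr_sumsq; apply/allP => _ /mapP [y ys ->].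
  have ys' : y \in s by apply: mem_rem ys.
  have := hm y ys'; rewrite /in_valring.
  have -> : nu y = oadd (nu (y / m)) (nu m) by rewrite -nuM divfK.
  rewrite Eg; case: (nu (y / m)) => [h|] //= hle.
  by have := le_addr (- g) hle; rewrite addrK subrr.
by rewrite Et nuM ht expr2 nuM Eg /= addr0 mulr2n.
Qed.

Lemma sumsq_neq0 (s : seq K) : has (fun x => x != 0) s -> \sum_(y <- s) y ^+ 2 != 0.
Proof.
move=> /sumsq_val [m _ [_ E m0]]; apply/eqP => S; move: E; rewrite S nu0.
by have [g ->] := nu_neq0 m0.
Qed.

Lemma ole_double x y : ole le x y -> ole le (odouble x) (odouble y).
Proof.
case: x => [g|]; case: y => [h|] //= hgh; rewrite !mulr2n.
case: hG => _ _ t _ _; apply: t (le_addr h hgh).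
by rewrite ![_ + h]addrC; apply: le_addr.
Qed.

End Val.

Section Lin.
Variables (K : fieldType) (U V : lmodType K) (f : U -> V).
Hypothesis hf : forall a x y, f (a *: x + y) = a *: f x + f y.
Lemma lin0 : f 0 = 0.
Proof.
have := hf 1 0 0; rewrite scale1r addr0 scale1r => /esym/eqP.
by rewrite -subr_eq0 addrK => /eqP.
Qed.
Lemma linD x y : f (x + y) = f x + f y.
Proof. by have := hf 1 x y; rewrite !scale1r. Qed.
Lemma linZ a x : f (a *: x) = a *: f x.
Proof. by have := hf a x 0; rewrite !addr0 lin0 addr0. Qed.
Lemma lin_sum I (r : seq I) (F : I -> U) : f (\sum_(i <- r) F i) = \sum_(i <- r) f (F i).
Proof. exact: (big_morph f linD lin0). Qed.
End Lin.

Lemma comm_scalar (K : fieldType) n (P : 'M[K]_n) (i0 : 'I_n) :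
  (forall A, P *m A = A *m P) -> P = (P i0 i0)%:M.
Proof.
move=> hP; apply/matrixP => i j; rewrite mxE.
have E a b k l : (P *m delta_mx a b) k l = P k a * (l == b)%:R.
  rewrite mxE (bigD1 a) //= big1 => [|m /negbTE ma]; last by rewrite mxE ma /= mulr0.
  by rewrite mxE eqxx addr0.
have E' a b k l : (delta_mx a b *m P) k l = (k == a)%:R * P b l.
  rewrite mxE (bigD1 b) //= big1 => [|m /negbTE ma]; last by rewrite mxE ma andbF mul0r.
  by rewrite mxE eqxx andbT addr0.
case: (eqVneq i j) => [<-|ij].
  have /matrixP /(_ i0 i) := hP (delta_mx i0 i).
  by rewrite E E' !eqxx mulr1 mul1r => ->.
have /matrixP /(_ i j) := hP (delta_mx j j).
by rewrite E E' eqxx mulr1 (negbTE ij) mul0r => ->.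
Qed.

Section Main.
Variables (K : fieldType) (H : falgType K) (tau : H -> K) (star : H -> H)
  (L : finType) (d : L -> nat) (rho : forall l : L, H -> 'M[K]_(d l))
  (c : L -> K) (B : seq H).
Hypothesis htau : symmetrizing_form tau.
Hypothesis hrho : split_semisimple_data rho.
Hypothesis hc : schur_elements rho tau c.
Hypothesis hstar : involutive_antiautomorphism star.
Hypothesis hB : star_symmetric_basis tau star B.
Hypothesis hnat : forall n, (0 < n)%N -> n%:R != 0 :> K.
Hypothesis hsq : forall s : seq K, has (fun x => x != 0) s -> \sum_(y <- s) y ^+ 2 != 0.

Local Notation chi := (character rho).

Let tauL : forall a x y, (tau : H -> K^o) (a *: x + y) = a *: (tau x : K^o) + tau y.
Proof. by case: htau. Qed.
Let rhoL l : forall a x y, rho l (a *: x + y) = a *: rho l x + rho l y.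
Proof. by case: hrho => _ [h _ _ _ _]; apply: h. Qed.
Let starL : forall a x y, star (a *: x + y) = a *: star x + star y.
Proof. by case: hstar. Qed.
Let rhoM l x y : rho l (x * y) = rho l x *m rho l y.
Proof. by case: hrho => _ [_ h _ _ _]; apply: h. Qed.
Let rho1 l : rho l 1 = 1%:M.
Proof. by case: hrho => _ [_ _ h _ _]; apply: h. Qed.
Let rho_inj x y : (forall l, rho l x = rho l y) -> x = y.
Proof. by case: hrho => _ [_ _ _ h _]; apply: h. Qed.
Let rho_surj M : exists h, forall l, rho l h = M l.
Proof. by case: hrho => _ [_ _ _ _ h]; apply: h. Qed.
Let dpos l : (0 < d l)%N.
Proof. by case: hrho. Qed.
Let starM x y : star (x * y) = star y * star x.
Proof. by case: hstar. Qed.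
Let starK : involutive star.
Proof. by case: hstar. Qed.
Let tauC x y : tau (x * y) = tau (y * x).
Proof. by case: htau. Qed.
Let c0 l : c l != 0.
Proof. by case: hc. Qed.
Let tauE h : tau h = \sum_l (c l)^-1 * chi l h.
Proof. by case: hc. Qed.

Lemma chiL l : forall a x y, (chi l : H -> K^o) (a *: x + y) = a *: (chi l x : K^o) + chi l y.
Proof. by move=> a x y; rewrite /character rhoL mxtraceD mxtraceZ. Qed.

Lemma rho_surj1 l (A : 'M[K]_(d l)) : exists h, rho l h = A.
Proof.
have [h hh] := rho_surj (fun m => conform_mx (0 : 'M[K]_(d m)) A).
by exists h; rewrite hh conform_mx_id.
Qed.

Definition eP l h := [forall m, rho m h == ((m == l)%:R)%:M].
Lemma ex_e l : exists h, eP l h.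
Proof.
have [h hh] := rho_surj (fun m => ((m == l)%:R)%:M).
by exists h; apply/forallP => m; rewrite hh.
Qed.
Definition e l := xchoose (ex_e l).
Lemma rho_e l m : rho m (e l) = ((m == l)%:R)%:M.
Proof. by have /forallP /(_ m) /eqP := xchooseP (ex_e l). Qed.

Lemma e_central l y : e l * y = y * e l.
Proof. by apply: rho_inj => m; rewrite !rhoM rho_e scalar_mxC. Qed.

Lemma e_orth l m : m != l -> e m * e l = 0.
Proof.
move=> ml; apply: rho_inj => k; rewrite rhoM !rho_e (lin0 (rhoL k)) -scalar_mxM.
case: (eqVneq k m) => [->|km]; first by rewrite (negbTE ml) mulr0 raddf0.
by rewrite mul0r raddf0.
Qed.

Lemma e_idem l : e l * e l = e l.
Proof.
apply: rho_inj => k; rewrite rhoM !rho_e -scalar_mxM.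
by case: (k == l); rewrite ?mulr1 ?mulr0.
Qed.

Lemma tau_e l y : tau (e l * y) = (c l)^-1 * chi l y.
Proof.
rewrite tauE (bigD1 l) //= big1 => [|m ml].
  by rewrite addr0 /character rhoM rho_e eqxx mul_scalar_mx scale1r.
by rewrite /character rhoM rho_e (negbTE ml) mul_scalar_mx scale0r mxtrace0 mulr0.
Qed.

Definition z l := c l *: e l.
Lemma tau_z l y : tau (z l * y) = chi l y.
Proof.
by rewrite /z -scalerAl (linZ tauL) tau_e /GRing.scale /= mulrA divff // mul1r.
Qed.

Let n := size B.
Let X := in_tuple B.
Let bs (i : 'I_n) := B`_i.
Let Bbasis : basis_of fullv X.
Proof. by case: hB. Qed.
Let Buniq : uniq B.
Proof. by apply: free_uniq; case/andP: Bbasis. Qed.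
Let Bstar : {in B &, forall b c, tau (b * star c) = (b == c)%:R}.
Proof. by case: hB. Qed.

Lemma expand x : x = \sum_i coord X i x *: bs i.
Proof. exact: (coord_basis Bbasis (memvf x)). Qed.

Lemma coordE x j : coord X j x = tau (x * star (bs j)).
Proof.
rewrite {2}(expand x) mulr_suml (lin_sum tauL).
rewrite (bigD1 j) //= big1 => [|i ij].
  rewrite -scalerAl (linZ tauL) Bstar ?mem_nth // eqxx.
  by rewrite /GRing.scale /= mulr1 addr0.
rewrite -scalerAl (linZ tauL) Bstar ?mem_nth //.
by rewrite nth_uniq // (inj_eq val_inj) (negbTE ij) /GRing.scale /= mulr0.
Qed.

Lemma formE x y : tau (x * star y) = \sum_i coord X i x * coord X i y.
Proof.
rewrite {1}(expand y) (lin_sum starL) mulr_sumr (lin_sum tauL).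
apply: eq_bigr => i _; rewrite (linZ starL) -scalerAr (linZ tauL) -coordE.
by rewrite /GRing.scale /= mulrC.
Qed.

Lemma form_sym x y : tau (x * star y) = tau (y * star x).
Proof. by rewrite !formE; apply: eq_bigr => i _; rewrite mulrC. Qed.

Lemma star0 : star 0 = 0. Proof. exact: lin0 starL. Qed.
Lemma star1 : star 1 = 1. Proof. by case: hstar. Qed.

Lemma chi1 l : chi l 1 = (d l)%:R.
Proof. by rewrite /character rho1 mxtrace1. Qed.

Lemma scalar_inj l (a b : K) : (a%:M : 'M[K]_(d l)) = b%:M -> a = b.
Proof.
move=> E; have : \tr (a%:M : 'M[K]_(d l)) = \tr (b%:M : 'M[K]_(d l)) by rewrite E.
rewrite !mxtrace_scalar -[a *+ _]mulr_natr -[b *+ _]mulr_natr; exact: (mulIf (hnat (dpos l))).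
Qed.

Lemma rho_star_e l m : rho m (star (e l)) = 0 \/ rho m (star (e l)) = 1%:M.
Proof.
set f := star (e l).
have fc y : f * y = y * f.
  by rewrite /f -{1}(starK y) -starM -e_central starM starK.
have ff : f * f = f by rewrite /f -starM e_idem.
have hP : forall A, rho m f *m A = A *m rho m f.
  by move=> A; have [y <-] := rho_surj1 A; rewrite -!rhoM fc.
have := comm_scalar (Ordinal (dpos m)) hP; set a := rho m f _ _ => Ea.
have : (a * a)%:M = a%:M :> 'M[K]_(d m) by rewrite scalar_mxM -Ea -rhoM ff.
move/scalar_inj => aa.
have : a * (a - 1) == 0 by rewrite mulrBr mulr1 aa subrr.
rewrite mulf_eq0 subr_eq0 => /orP[] /eqP a0; [left|right]; by rewrite Ea a0 ?raddf0.
Qed.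

Lemma some_chi_star l : exists j, chi l (star (bs j)) != 0.
Proof.
case: (boolP [exists j, chi l (star (bs j)) != 0]) => [/existsP //|]; rewrite negb_exists => /forallP h.
have E : (1 : H) = star (\sum_i coord X i (star 1) *: bs i) by rewrite -expand starK.
have := chi1 l; rewrite E (lin_sum starL) (lin_sum (chiL l)).
rewrite big1 => [|i _]; last by rewrite (linZ starL) (linZ (chiL l)) (eqP (negPn (h i))) scaler0.
by move/eqP; rewrite eq_sym (negbTE (hnat (dpos l))).
Qed.

Lemma coord_z l j : coord X j (z l) = chi l (star (bs j)).
Proof. by rewrite coordE tau_z. Qed.

Lemma rho_star_e_self l : rho l (star (e l)) = 1%:M.
Proof.
case: (rho_star_e l l) => // h0; exfalso.
have : tau (z l * star (z l)) = 0.
  rewrite tau_z /z (linZ starL) /character (linZ (rhoL l)) h0.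
  by rewrite scaler0 mxtrace0.
rewrite formE; apply/eqP.
have := hsq (s := [seq coord X i (z l) | i <- enum 'I_n]).
rewrite big_map big_enum /=.
have -> : \sum_(i in 'I_n) coord X i (z l) ^+ 2 = \sum_i coord X i (z l) * coord X i (z l).
  by apply: eq_bigr => i _; rewrite expr2.
apply; have [j hj] := some_chi_star l; apply/hasP; exists (chi l (star (bs j))) => //.
by apply/mapP; exists j; rewrite ?mem_enum ?coord_z.
Qed.

Lemma rho0 m : rho m 0 = 0. Proof. exact: lin0 (rhoL m). Qed.

Lemma star_e l : star (e l) = e l.
Proof.
apply: rho_inj => m; rewrite rho_e.
case: (eqVneq m l) => [->|ml]; first by rewrite rho_star_e_self.
case: (rho_star_e l m) => h; first by rewrite h raddf0.
exfalso; have : rho m (star (e l) * star (e m)) = 1%:M.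
  by rewrite rhoM h rho_star_e_self mul1mx.
rewrite -starM e_orth // star0 rho0 => /esym.
move/(congr1 (@mxtrace _ _)); rewrite mxtrace1 mxtrace0; apply/eqP.
exact: hnat.
Qed.

Lemma star_z l : star (z l) = z l.
Proof. by rewrite /z (linZ starL) star_e. Qed.

Lemma partA l h : chi l (star h) = chi l h.
Proof. by rewrite -tau_z form_sym star_z tauC tau_z. Qed.

Lemma sumsq_chi l : \sum_(x <- B) chi l x ^+ 2 = c l * (d l)%:R.
Proof.
have : tau (z l * star (z l)) = c l * (d l)%:R.
  by rewrite tau_z star_z /z /character (linZ (rhoL l)) rho_e eqxx mxtraceZ mxtrace1.
rewrite formE => <-; rewrite (big_nth 0) big_mkord; apply: eq_bigr => i _.
by rewrite coord_z partA expr2.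
Qed.

End Main.
Unset Implicit Arguments.

Theorem mainTheorem6
  (G : zmodType) (le : rel G) (K : fieldType) (nu : K -> option G)
  (H : falgType K) (tau : H -> K) (star : H -> H)
  (L : finType) (d : L -> nat) (rho : forall l : L, H -> 'M[K]_(d l))
  (c : L -> K) (B : seq H) :
  ordered_abelian_group le ->
  surj_valuation le nu ->
  residue_formally_real le nu ->
  symmetrizing_form tau ->
  split_semisimple_data rho ->
  schur_elements rho tau c ->
  involutive_antiautomorphism star ->
  star_symmetric_basis tau star B ->
  forall l : L,
    (forall h : H, character rho l h = character rho l (star h)) /\
    ({in B, forall x, ole le (nu (c l)) (odouble (nu (character rho l x)))} /\
     exists2 x, x \in B & odouble (nu (character rho l x)) = nu (c l)).
Proof.
move=> hG hnu hfr htau hrho hc hstar hB l.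
have hnat := natr_neq0 hG hnu hfr.
have hsq := sumsq_neq0 hG hnu hfr.
split; first by move=> h; rewrite (partA htau hrho hc hstar hB hnat hsq).
have hS := sumsq_chi htau hrho hc hstar hB hnat hsq l.
have dpos : (0 < d l)%N by case: hrho.
have c0 : c l != 0 by case: hc.
set s := [seq character rho l x | x <- B].
have hs : has (fun x => x != 0) s.
  apply/negPn/negP => /hasPn h0; move: hS; rewrite big1_seq => [|x xB].
    by move/esym/eqP; rewrite mulf_eq0 (negbTE c0) (negbTE (hnat _ dpos)).
  by rewrite (eqP (negPn (h0 _ (map_f _ xB)))) expr0n.
have [m ms [hm E _]] := sumsq_val hG hnu hfr hs.
rewrite big_map hS (nuM hnu) -(prednK dpos) (nu_natr hG hnu hfr) in E.
have Ec : nu (c l) = odouble (nu m) by move: E; case: (nu (c l)) => //= g; rewrite addr0.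
rewrite Ec; split.
  by move=> x xB; apply: (ole_double hG); apply: hm; apply: map_f.
by case/mapP: ms => x xB ->; exists x.
Qed.
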